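(* Let $V$ be a toroidal vertex algebra and let $(W,Y_W)$ be a $V$-module. Then for every $v\in V$ and $(m_0,\mathbf{m})\in\mathbb{Z}\times\mathbb{Z}^r$, $$Y_W(v_{m_0,\mathbf{m}}\mathbf{1};x_0,\mathbf{x})\in \mathbf{x}^{-\mathbf{m}}\,\mathcal{E}(W),$$ and $$Y_W(v;x_0,\mathbf{x})=\sum_{\mathbf{m}\in\mathbb{Z}^r}Y_W(v_{-1,\mathbf{m}}\mathbf{1};x_0,\mathbf{x}).$$ For $u\in V^0$ set $Y_W^0(u,x_0)=Y_W(u;x_0,\mathbf{x})|_{\mathbf{x}=1}\in\mathcal{E}(W)$. Then $(W,Y_W^0)$ is a module for $V^0$ viewed as a vertex algebra (with vertex operator map $Y^0$). Furthermore, if $(W,Y_W)$ is an irreducible $V$-module, then $(W,Y_W^0)$ is an irreducible module for the vertex algebra $V^0$.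
   Context: Fix a positive integer $r$. Write $\mathbf{x}=(x_1,\dots,x_r)$ and $\mathbf{x}^{\mathbf{m}}=x_1^{m_1}\cdots x_r^{m_r}$ for $\mathbf{m}\in\mathbb{Z}^r$ (similarly for other variables), and $\mathbf{z}\mathbf{y}=(z_1y_1,\dots,z_ry_r)$. For a vector space $W$ put $\mathcal{E}(W,r)=\mathrm{Hom}(W,W[[x_1^{\pm1},\dots,x_r^{\pm1}]]((x_0)))$ and $\mathcal{E}(W)=\mathrm{Hom}(W,W((x_0)))$. A toroidal vertex algebra is a vector space $V$ with a linear map $Y(\cdot;x_0,\mathbf{x}):V\to\mathcal{E}(V,r)$, $v\mapsto\sum_{(m_0,\mathbf{m})\in\mathbb{Z}\times\mathbb{Z}^r}v_{m_0,\mathbf{m}}x_0^{-m_0-1}\mathbf{x}^{-\mathbf{m}}$, and a vector $\mathbf{1}\in V$ such that $Y(\mathbf{1};x_0,\mathbf{x})v=v$ and $Y(v;x_0,\mathbf{x})\mathbf{1}\in V[[x_0,x_1^{\pm1},\dots,x_r^{\pm1}]]$ for all $v\in V$, and for all $u,v\in V$ $$z_0^{-1}\delta\!\left(\tfrac{x_0-y_0}{z_0}\right)Y(u;x_0,\mathbf{z}\mathbf{y})Y(v;y_0,\mathbf{y})-z_0^{-1}\delta\!\left(\tfrac{y_0-x_0}{-z_0}\right)Y(v;y_0,\mathbf{y})Y(u;x_0,\mathbf{z}\mathbf{y})=y_0^{-1}\delta\!\left(\tfrac{x_0-z_0}{y_0}\right)Y(Y(u;z_0,\mathbf{z})v;y_0,\mathbf{y}),$$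 where $Y(u;x_0,\mathbf{z}\mathbf{y})=\sum u_{m_0,\mathbf{m}}x_0^{-m_0-1}\mathbf{z}^{-\mathbf{m}}\mathbf{y}^{-\mathbf{m}}$. A $V$-module is a vector space $W$ with a linear map $Y_W(\cdot;x_0,\mathbf{x}):V\to\mathcal{E}(W,r)$ with $Y_W(\mathbf{1};x_0,\mathbf{x})=1_W$ satisfying the same Jacobi identity with $Y$ replaced by $Y_W$ in the three outer operator places (the inner $Y(u;z_0,\mathbf{z})v$ remaining the algebra's). For a toroidal vertex algebra $V$, $V^0=\mathrm{span}\{v_{m_0,\mathbf{m}}\mathbf{1}\mid v\in V,(m_0,\mathbf{m})\in\mathbb{Z}\times\mathbb{Z}^r\}$; it is a toroidal vertex subalgebra, $Y(v;x_0,\mathbf{x})\in\mathcal{E}(V)[x_1^{\pm1},\dots,x_r^{\pm1}]$ for $v\in V^0$, and with $Y^0(v,x_0)=Y(v;x_0,\mathbf{x})|_{\mathbf{x}=1}$ the triple $(V^0,Y^0,\mathbf{1})$ is a vertex algebra. *)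

(* Defs.v *)
From HB Require Import structures.
From mathcomp Require Import all_boot all_order all_algebra.
Set Implicit Arguments. Unset Strict Implicit. Unset Printing Implicit Defensive.
Import Order.TTheory GRing.Theory Num.Theory.
Local Open Scope ring_scope.

(* A map  Y : V -> E(W,r)  is encoded by its modes:
     Y v m0 m w  =  v_{m0,m} w,  where
     Y(v;x0,x) w = sum_{m0,m} v_{m0,m} w x0^{-m0-1} x^{-m}.
   A map  Y : V -> E(W)  (ordinary vertex operators) is encoded by
     Y v n w = v_n w. *)

Section Defs.
Variable K : fieldType.

(* generalized binomial coefficient  binom(k, i)  for k : int, i : nat,
   as an integer: binom(-(n+1), i) = (-1)^i binom(n+i, i). *)
Definition binz (k : int) (i : nat) : int :=
  match k with
  | Posz n => ('C(n, i))%:Z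
  | Negz n => (-1) ^+ i * ('C(n + i, i))%:Z
  end.

Definition bin (k : int) (i : nat) : K := (binz k i)%:~R.

Definition is_fsum (r : nat) (W : lmodType K) (f : 'rV[int]_r -> W) (x : W)
  : Prop :=
  exists s : seq 'rV[int]_r,
    [/\ uniq s, (forall m, m \notin s -> f m = 0) & x = \sum_(m <- s) f m].

Section Toroidal.
Variable r : nat.
Variable V : lmodType K.
Variable Y : V -> int -> 'rV[int]_r -> V -> V.
Variable one : V.

(* Y_W : V -> E(W,r) is linear (in v and in w) with values in
   W[[x_1^{+-1},...,x_r^{+-1}]]((x0)) *)
Definition toroidal_field_map (W : lmodType K)
  (YW : V -> int -> 'rV[int]_r -> W -> W) : Prop :=
  [/\ (forall a u1 u2 n m w, YW (a *: u1 + u2) n m w = a *: YW u1 n m w + YW u2 n m w),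
      (forall u n m a w1 w2, YW u n m (a *: w1 + w2) = a *: YW u n m w1 + YW u n m w2)
    & (forall u w, exists N : int, forall n m, N <= n -> YW u n m w = 0)].

(* The toroidal Jacobi identity for outer operators YW and inner operator Y,
   written coefficientwise: coefficient of
   x0^{-p-1} y0^{-q-1} z0^{-s-1} z^{-m} y^{-n} applied to w.
   The (a priori infinite) sums over i are finite by truncation; we require
   equality of the partial sums up to any N beyond which all terms vanish. *)
Definition toroidal_jacobi (W : lmodType K)
  (YW : V -> int -> 'rV[int]_r -> W -> W) : Prop :=
  forall (u v : V) (w : W) (p q s : int) (m n : 'rV[int]_r) (N : nat),
    let T1 i := ((-1) ^+ i * bin s i) *: YW u (p + s - i%:Z) m (YW v (q + i%:Z) (n - m) w) in
    let T2 i := ((-1) ^+ i * bin s i) *: YW v (q + s - i%:Z) (n - m) (YW u (p + i%:Z) m w) in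
    let R  i := bin p i *: YW (Y u (s + i%:Z) m v) (p + q - i%:Z) n w in
    (forall i : nat, (N <= i)%N -> [/\ T1 i = 0, T2 i = 0 & R i = 0]) ->
    \sum_(i < N) T1 i - (-1) ^ s *: \sum_(i < N) T2 i = \sum_(i < N) R i.

Definition toroidal_vertex_algebra : Prop :=
  [/\ toroidal_field_map Y,
      (forall n m v, Y one n m v = if (n == -1) && (m == 0) then v else 0),
      (forall v n m, 0 <= n -> Y v n m one = 0)
    & toroidal_jacobi Y].

Definition toroidal_module (W : lmodType K)
  (YW : V -> int -> 'rV[int]_r -> W -> W) : Prop :=
  [/\ toroidal_field_map YW,
      (forall n m w, YW one n m w = if (n == -1) && (m == 0) then w else 0)
    & toroidal_jacobi YW].

Definition in_V0 (u : V) : Prop :=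
  exists s : seq (K * V * int * 'rV[int]_r),
    u = \sum_(t <- s) t.1.1.1 *: Y t.1.1.2 t.1.2 t.2 one.

Definition subspace (W : lmodType K) (U : W -> Prop) : Prop :=
  U 0 /\ forall a x y, U x -> U y -> U (a *: x + y).

Definition toroidal_irreducible (W : lmodType K)
  (YW : V -> int -> 'rV[int]_r -> W -> W) : Prop :=
  (exists w : W, w <> 0) /\
  forall U : W -> Prop, subspace U ->
    (forall v n m w, U w -> U (YW v n m w)) ->
    (forall w, U w -> w = 0) \/ (forall w, U w).
End Toroidal.

Section VA.
(* A vertex algebra structure (Y0, one) on a subspace P of V, and its
   modules: YW is only required/used on elements of P. *)
Variable V : lmodType K.
Variable P : V -> Prop.
Variable Y0 : V -> int -> V -> V.
Variable one : V.

Definition va_module (W : lmodType K) (YW : V -> int -> W -> W) : Prop :=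
  [/\ (forall a u1 u2 n w, P u1 -> P u2 ->
          YW (a *: u1 + u2) n w = a *: YW u1 n w + YW u2 n w),
      (forall u n a w1 w2, P u -> YW u n (a *: w1 + w2) = a *: YW u n w1 + YW u n w2),
      (forall u w, P u -> exists N : int, forall n, N <= n -> YW u n w = 0),
      (forall n w, YW one n w = if n == -1 then w else 0)
    & (forall (u v : V) (w : W) (p q s : int) (N : nat), P u -> P v ->
        let T1 i := ((-1) ^+ i * bin s i) *: YW u (p + s - i%:Z) (YW v (q + i%:Z) w) in
        let T2 i := ((-1) ^+ i * bin s i) *: YW v (q + s - i%:Z) (YW u (p + i%:Z) w) in
        let R  i := bin p i *: YW (Y0 u (s + i%:Z) v) (p + q - i%:Z) w in
        (forall i : nat, (N <= i)%N -> [/\ T1 i = 0, T2 i = 0 & R i = 0]) ->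
        \sum_(i < N) T1 i - (-1) ^ s *: \sum_(i < N) T2 i = \sum_(i < N) R i)].

Definition va_irreducible (W : lmodType K) (YW : V -> int -> W -> W) : Prop :=
  (exists w : W, w <> 0) /\
  forall U : W -> Prop, subspace U ->
    (forall u n w, P u -> U w -> U (YW u n w)) ->
    (forall w, U w -> w = 0) \/ (forall w, U w).
End VA.
End Defs.

(* Main.v *)
Require Import Defs.
From HB Require Import structures.
From mathcomp Require Import all_boot all_order all_algebra.
From mathcomp Require Import zify.
From Stdlib Require Import ClassicalEpsilon.
Set Implicit Arguments. Unset Strict Implicit. Unset Printing Implicit Defensive.
Import Order.TTheory GRing.Theory Num.Theory.
Local Open Scope ring_scope.



Lemma fm_u0 (K : fieldType) (r : nat) (V W : lmodType K)
  (YW : V -> int -> 'rV[int]_r -> W -> W) (HF : toroidal_field_map YW) n m w :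
  YW 0 n m w = 0.
Proof.
case: HF => H1 _ _; have := H1 1 0 0 n m w.
rewrite !scale1r addr0 => H; apply/esym/(addrI (YW 0 n m w)); by rewrite addr0 -H.
Qed.

Lemma fm_w0 (K : fieldType) (r : nat) (V W : lmodType K)
  (YW : V -> int -> 'rV[int]_r -> W -> W) (HF : toroidal_field_map YW) u n m :
  YW u n m 0 = 0.
Proof.
case: HF => _ H2 _; have := H2 u n m 1 0 0.
rewrite !scale1r addr0 => H; apply/esym/(addrI (YW u n m 0)); by rewrite addr0 -H.
Qed.

Lemma fm_uD (K : fieldType) (r : nat) (V W : lmodType K)
  (YW : V -> int -> 'rV[int]_r -> W -> W) (HF : toroidal_field_map YW) u1 u2 n m w :
  YW (u1 + u2) n m w = YW u1 n m w + YW u2 n m w.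
Proof. by case: HF => H1 _ _; have := H1 1 u1 u2 n m w; rewrite !scale1r. Qed.

Lemma fm_uZ (K : fieldType) (r : nat) (V W : lmodType K)
  (YW : V -> int -> 'rV[int]_r -> W -> W) (HF : toroidal_field_map YW) a u n m w :
  YW (a *: u) n m w = a *: YW u n m w.
Proof.
case: (HF) => H1 _ _; have := H1 a u 0 n m w.
by rewrite !addr0 (fm_u0 HF) addr0.
Qed.

Lemma fm_wD (K : fieldType) (r : nat) (V W : lmodType K)
  (YW : V -> int -> 'rV[int]_r -> W -> W) (HF : toroidal_field_map YW) u n m w1 w2 :
  YW u n m (w1 + w2) = YW u n m w1 + YW u n m w2.
Proof. by case: HF => _ H2 _; have := H2 u n m 1 w1 w2; rewrite !scale1r. Qed.

Lemma fm_wZ (K : fieldType) (r : nat) (V W : lmodType K)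
  (YW : V -> int -> 'rV[int]_r -> W -> W) (HF : toroidal_field_map YW) a u n m w :
  YW u n m (a *: w) = a *: YW u n m w.
Proof.
case: (HF) => _ H2 _; have := H2 u n m a w 0.
by rewrite !addr0 (fm_w0 HF) addr0.
Qed.

Lemma fm_usum (K : fieldType) (r : nat) (V W : lmodType K)
  (YW : V -> int -> 'rV[int]_r -> W -> W) (HF : toroidal_field_map YW)
  (I : Type) (s : seq I) (F : I -> V) n m w :
  YW (\sum_(i <- s) F i) n m w = \sum_(i <- s) YW (F i) n m w.
Proof.
elim: s => [|x s IH]; first by rewrite !big_nil (fm_u0 HF).
by rewrite !big_cons (fm_uD HF) IH.
Qed.

Lemma fm_wsum (K : fieldType) (r : nat) (V W : lmodType K)
  (YW : V -> int -> 'rV[int]_r -> W -> W) (HF : toroidal_field_map YW)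
  (I : Type) (s : seq I) (F : I -> W) u n m :
  YW u n m (\sum_(i <- s) F i) = \sum_(i <- s) YW u n m (F i).
Proof.
elim: s => [|x s IH]; first by rewrite !big_nil (fm_w0 HF).
by rewrite !big_cons (fm_wD HF) IH.
Qed.

Lemma bin_k0 (K : fieldType) (k : int) : bin K k 0 = 1.
Proof. by case: k => n; rewrite /bin /binz ?expr0 ?mul1r ?addn0 ?bin0. Qed.

Lemma bin_0i (K : fieldType) (i : nat) : (0 < i)%N -> bin K 0 i = 0.
Proof. by case: i => // i _; rewrite /bin /binz bin0n. Qed.



Lemma L1 (K : fieldType) (r : nat) (V : lmodType K)
  (Y : V -> int -> 'rV[int]_r -> V -> V) (one : V)
  (W : lmodType K) (YW : V -> int -> 'rV[int]_r -> W -> W)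
  (HW : toroidal_module Y one YW) u v m n :
  (forall j x, YW v j (n - m) x = 0) -> forall s q w, YW (Y u s m v) q n w = 0.
Proof.
move=> Hv s q w; case: HW => HF _ HJ.
have := HJ u v w 0 q s m n 1%N; cbv beta zeta.
rewrite !big_ord1 /= !Hv (fm_w0 HF) !scaler0 subr0 bin_k0 scale1r addr0 add0r subr0.

have E : forall z : int, 0 + z = z by move=> z; lia.
rewrite E => H; rewrite -H //.
move=> i Hi; rewrite !Hv (fm_w0 HF) !scaler0 bin_0i // scale0r; by split.
Qed.

Lemma part1 (K : fieldType) (r : nat) (V : lmodType K)
  (Y : V -> int -> 'rV[int]_r -> V -> V) (one : V)
  (W : lmodType K) (YW : V -> int -> 'rV[int]_r -> W -> W)
  (HW : toroidal_module Y one YW) v m0 m n k w :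
  k != m -> YW (Y v m0 m one) n k w = 0.
Proof.
move=> km; apply: (L1 HW) => j x.
case: HW => _ H1 _; rewrite H1.
have -> : (k - m == 0) = false by apply: negbTE; rewrite subr_eq0.
by rewrite andbF.
Qed.

Lemma part2 (K : fieldType) (r : nat) (V : lmodType K)
  (Y : V -> int -> 'rV[int]_r -> V -> V) (one : V)
  (HV : toroidal_vertex_algebra Y one)
  (W : lmodType K) (YW : V -> int -> 'rV[int]_r -> W -> W)
  (HW : toroidal_module Y one YW) v n k w :
  YW (Y v (-1) k one) n k w = YW v n k w.
Proof.
case: (HV) => HFV _ Hvac _.
case: (HW) => HF H1 HJ.
have := HJ v one w (n + 1) (-1) (-1) k k 1%N; cbv beta zeta.
rewrite !big_ord1 /= subrr !H1 eqxx ?andbT.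
have -> : (-1 + -1 - (0%:Z) == -1 :> int) = false by apply: negbTE; apply/eqP; lia.
rewrite /= scaler0 subr0 !bin_k0 expr0 mul1r !scale1r addrK.
have -> : -1 + 0%:Z = -1 :> int by lia.
move=> H; rewrite -H ?eqxx ?scaler0 ?subr0 //.
move=> i Hi; rewrite !H1 eqxx !andbT.
have -> : (-1 + i%:Z == -1 :> int) = false by apply: negbTE; apply/eqP; lia.
have -> : (-1 + -1 - i%:Z == -1 :> int) = false by apply: negbTE; apply/eqP; lia.
rewrite (fm_w0 HF) !scaler0 Hvac; last by lia.
by rewrite (fm_u0 HF) scaler0.
Qed.



Definition supp_in (r : nat) (X : zmodType) (f : 'rV[int]_r -> X) (s : seq 'rV[int]_r) :=
  forall m, m \notin s -> f m = 0.

Lemma sum_supp (r : nat) (X : zmodType) (f : 'rV[int]_r -> X) s1 s2 :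
  uniq s1 -> uniq s2 -> supp_in f s1 -> supp_in f s2 ->
  \sum_(m <- s1) f m = \sum_(m <- s2) f m.
Proof.
move=> u1 u2 h1 h2.
have E : forall sa sb, supp_in f sb ->
   \sum_(m <- sa) f m = \sum_(m <- [seq x <- sa | x \in sb]) f m.
  move=> sa sb hb; rewrite big_filter [in RHS]big_mkcond /=; apply: eq_bigr => m _.
  by case: ifP => // /negbT /hb.
rewrite (E s1 s2 h2) (E s2 s1 h1); apply: perm_big.
apply: uniq_perm; rewrite ?filter_uniq // => x; rewrite !mem_filter andbC //.
Qed.

Lemma fsum_unique (K : fieldType) (r : nat) (W : lmodType K) (f : 'rV[int]_r -> W) x s :
  is_fsum f x -> uniq s -> supp_in f s -> x = \sum_(m <- s) f m.
Proof. by case=> s0 [u0 h0 ->] us hs; apply: sum_supp. Qed.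

Lemma fsum_of (K : fieldType) (r : nat) (W : lmodType K) (f : 'rV[int]_r -> W) s :
  uniq s -> supp_in f s -> is_fsum f (\sum_(m <- s) f m).
Proof. by move=> us hs; exists s. Qed.

Definition Y0W_of (K : fieldType) (r : nat) (V W : lmodType K)
  (YW : V -> int -> 'rV[int]_r -> W -> W) (u : V) (n : int) (w : W) : W :=
  epsilon (inhabits 0) (is_fsum (fun m => YW u n m w)).

Lemma Y0W_char (K : fieldType) (r : nat) (V W : lmodType K)
  (YW : V -> int -> 'rV[int]_r -> W -> W) u n w s :
  uniq s -> supp_in (fun m => YW u n m w) s ->
  Y0W_of YW u n w = \sum_(m <- s) YW u n m w.
Proof.
move=> us hs; apply: (fsum_unique (s:=s)) => //.
rewrite /Y0W_of; apply: epsilon_spec.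
by exists (\sum_(m <- s) YW u n m w); apply: fsum_of.
Qed.

Lemma V0_supp (K : fieldType) (r : nat) (V : lmodType K)
  (Y : V -> int -> 'rV[int]_r -> V -> V) (one : V) u :
  in_V0 Y one u -> exists S : seq 'rV[int]_r, uniq S /\
    forall (W : lmodType K) (YW : V -> int -> 'rV[int]_r -> W -> W),
      toroidal_module Y one YW -> forall j x, supp_in (fun m => YW u j m x) S.
Proof.
case=> s ->; exists (undup [seq t.2 | t <- s]); split; first exact: undup_uniq.
move=> W YW HW j x m hm /=.
have HF : toroidal_field_map YW by case: HW.
rewrite (fm_usum HF); apply: big1_seq => t ts.
rewrite (fm_uZ HF) (part1 HW) ?scaler0 //.
apply/eqP => E; move: hm; by rewrite mem_undup E (map_f _ ts).
Qed.



Lemma sum_ext0 (X : zmodType) (N N' : nat) (F : nat -> X) :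
  (N <= N')%N -> (forall i, (N <= i)%N -> F i = 0) ->
  \sum_(i < N') F i = \sum_(i < N) F i.
Proof.
move=> NN HF; rewrite -!(big_mkord xpredT) (big_cat_nat _ (n:=N)) //=.
rewrite [X in _ + X]big_nat_cond [X in _ + X]big1 ?addr0 // => i /andP[/andP[Hi _] _].
exact: HF.
Qed.

Lemma jac_V0 (K : fieldType) (r : nat) (V : lmodType K)
  (Y : V -> int -> 'rV[int]_r -> V -> V) (one : V)
  (HV : toroidal_vertex_algebra Y one)
  (W : lmodType K) (YW : V -> int -> 'rV[int]_r -> W -> W)
  (HW : toroidal_module Y one YW)
  (Y0 : V -> int -> V -> V)
  (HY0 : forall u, in_V0 Y one u -> forall n v,
           is_fsum (fun m => Y u n m v) (Y0 u n v))
  (u v : V) (w : W) (p q s : int) (N : nat) :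
  in_V0 Y one u -> in_V0 Y one v ->
  let YW0 := Y0W_of YW in
        let T1 i := ((-1) ^+ i * bin K s i) *: YW0 u (p + s - i%:Z) (YW0 v (q + i%:Z) w) in
        let T2 i := ((-1) ^+ i * bin K s i) *: YW0 v (q + s - i%:Z) (YW0 u (p + i%:Z) w) in
        let R  i := bin K p i *: YW0 (Y0 u (s + i%:Z) v) (p + q - i%:Z) w in
        (forall i : nat, (N <= i)%N -> [/\ T1 i = 0, T2 i = 0 & R i = 0]) ->
        \sum_(i < N) T1 i - (-1) ^ s *: \sum_(i < N) T2 i = \sum_(i < N) R i.
Proof.
move=> Pu Pv; cbv beta zeta => Hvan.
have HVm : toroidal_module Y one Y by case: HV.
case: (HV) => HFV _ _ _.
case: (HW) => HF _ HJ.
have [Su [uSu hSu]] := V0_supp Pu.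
have [Sv [uSv hSv]] := V0_supp Pv.
have hSuW := hSu W YW HW; have hSuV := hSu V Y HVm.
have hSvW := hSv W YW HW; have hSvV := hSv V Y HVm.
set Nset := undup [seq a + b | a <- Su, b <- Sv].
have uN : uniq Nset by exact: undup_uniq.
have memN : forall a b, a \in Su -> b \in Sv -> a + b \in Nset.
  by move=> a b ha hb; rewrite mem_undup; apply/allpairsP; exists (a, b).
have shift : forall m j x, m \in Su ->
    \sum_(n <- Nset) YW v j (n - m) x = (Y0W_of YW) v j x.
  move=> m j x hm; rewrite (Y0W_char (s := [seq n - m | n <- Nset])).
  - by rewrite big_map.
  - rewrite map_inj_uniq // => a b /(congr1 (fun z => z + m)); by rewrite !subrK.
  move=> k hk; case: (boolP (k \in Sv)) => kS; last exact: hSvW.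
  case/negP: hk; apply/mapP; exists (m + k); first exact: memN.
  by rewrite [m + k]addrC addrK.
have Y0sum : forall j (F : 'rV[int]_r -> W),
    (Y0W_of YW) v j (\sum_(t <- Su) F t) = \sum_(t <- Su) (Y0W_of YW) v j (F t).
  move=> j F; rewrite (Y0W_char (s := Sv)) //.
  transitivity (\sum_(t <- Su) \sum_(k <- Sv) YW v j k (F t)); last first.
    by apply: eq_bigr => t _; rewrite (Y0W_char uSv (hSvW _ _)).
  rewrite exchange_big /=; apply: eq_bigr => k _; exact: (fm_wsum HF).
have [Nu HNu] : exists N0 : int, forall n m, N0 <= n -> YW u n m w = 0.
  by case: HF => _ _; apply.
have [Nv HNv] : exists N0 : int, forall n m, N0 <= n -> YW v n m w = 0.
  by case: HF => _ _; apply.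
have [NY HNY] : exists N0 : int, forall n m, N0 <= n -> Y u n m v = 0.
  by case: HFV => _ _; apply.
set N' := (N + (`|Nu - p| + `|Nv - q| + `|NY - s|))%N.
have NN' : (N <= N')%N by rewrite /N' leq_addr.
have E : forall m n,
  \sum_(i < N') (((-1) ^+ i * bin K s i) *: YW u (p + s - i%:Z) m (YW v (q + i%:Z) (n - m) w))
  - (-1) ^ s *: \sum_(i < N') (((-1) ^+ i * bin K s i) *: YW v (q + s - i%:Z) (n - m) (YW u (p + i%:Z) m w))
  = \sum_(i < N') (bin K p i *: YW (Y u (s + i%:Z) m v) (p + q - i%:Z) n w).
  move=> m n; have := HJ u v w p q s m n N'; cbv beta zeta; apply => i Hi.
  rewrite HNv; last by rewrite /N' in Hi; lia.
  rewrite (HNu (p + i%:Z)); last by rewrite /N' in Hi; lia.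
  rewrite HNY; last by rewrite /N' in Hi; lia.
  by rewrite (fm_w0 HF) (fm_w0 HF) (fm_u0 HF) !scaler0.
have h1 : forall i, (N <= i)%N -> ((-1) ^+ i * bin K s i) *: Y0W_of YW u (p + s - i%:Z) (Y0W_of YW v (q + i%:Z) w) = 0.
  by move=> i /Hvan [].
have h2 : forall i, (N <= i)%N -> ((-1) ^+ i * bin K s i) *: Y0W_of YW v (q + s - i%:Z) (Y0W_of YW u (p + i%:Z) w) = 0.
  by move=> i /Hvan [].
have h3 : forall i, (N <= i)%N -> bin K p i *: Y0W_of YW (Y0 u (s + i%:Z) v) (p + q - i%:Z) w = 0.
  by move=> i /Hvan [].
rewrite -(sum_ext0 NN' h1) -(sum_ext0 NN' h2) -(sum_ext0 NN' h3).
have A1 : \sum_(i < N') ((-1) ^+ i * bin K s i) *: Y0W_of YW u (p + s - i%:Z) (Y0W_of YW v (q + i%:Z) w)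
  = \sum_(m <- Su) \sum_(n <- Nset) \sum_(i < N') (((-1) ^+ i * bin K s i) *: YW u (p + s - i%:Z) m (YW v (q + i%:Z) (n - m) w)).
  symmetry; rewrite (eq_bigr (fun m => \sum_(i < N') \sum_(n <- Nset) (((-1) ^+ i * bin K s i) *: YW u (p + s - i%:Z) m (YW v (q + i%:Z) (n - m) w)))); last by move=> m _; rewrite exchange_big.
  rewrite exchange_big; apply: eq_bigr => i _ /=.
  rewrite (Y0W_char uSu (hSuW _ _)) scaler_sumr; apply: eq_big_seq => m hm.
  by rewrite -(shift m _ w hm) (fm_wsum HF) scaler_sumr.
have A2 : \sum_(i < N') ((-1) ^+ i * bin K s i) *: Y0W_of YW v (q + s - i%:Z) (Y0W_of YW u (p + i%:Z) w)
  = \sum_(m <- Su) \sum_(n <- Nset) \sum_(i < N') (((-1) ^+ i * bin K s i) *: YW v (q + s - i%:Z) (n - m) (YW u (p + i%:Z) m w)).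
  symmetry; rewrite (eq_bigr (fun m => \sum_(i < N') \sum_(n <- Nset) (((-1) ^+ i * bin K s i) *: YW v (q + s - i%:Z) (n - m) (YW u (p + i%:Z) m w)))); last by move=> m _; rewrite exchange_big.
  rewrite exchange_big; apply: eq_bigr => i _ /=.
  rewrite (Y0W_char uSu (hSuW _ _)) Y0sum scaler_sumr; apply: eq_big_seq => m hm.
  by rewrite -(shift m _ _ hm) scaler_sumr.
have A3 : \sum_(i < N') bin K p i *: Y0W_of YW (Y0 u (s + i%:Z) v) (p + q - i%:Z) w
  = \sum_(m <- Su) \sum_(n <- Nset) \sum_(i < N') (bin K p i *: YW (Y u (s + i%:Z) m v) (p + q - i%:Z) n w).
  symmetry; rewrite (eq_bigr (fun m => \sum_(i < N') \sum_(n <- Nset) (bin K p i *: YW (Y u (s + i%:Z) m v) (p + q - i%:Z) n w))); last by move=> m _; rewrite exchange_big.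
  rewrite exchange_big; apply: eq_bigr => i _ /=.
  have EY : Y0 u (s + i%:Z) v = \sum_(m <- Su) Y u (s + i%:Z) m v.
    exact: (fsum_unique (HY0 u Pu _ v) uSu (hSuV _ _)).
  rewrite (Y0W_char (s := Nset)) //; last first.
    move=> n hn /=; rewrite EY (fm_usum HF); apply: big1_seq => m hm.
    apply: (L1 HW) => j x; apply: hSvW; apply/negP => hnm; case/negP: hn.
    by have := memN _ _ hm hnm; rewrite addrC subrK.
  rewrite scaler_sumr exchange_big; apply: eq_bigr => n _.
  by rewrite EY (fm_usum HF) scaler_sumr.
rewrite A1 A2 A3 !scaler_sumr -sumrB; apply: eq_bigr => m _.
rewrite !scaler_sumr -sumrB; apply: eq_bigr => n _.
by rewrite -E.
Qed.



Lemma supp_sub (r : nat) (X : zmodType) (f : 'rV[int]_r -> X) s1 s2 :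
  supp_in f s1 -> {subset s1 <= s2} -> supp_in f s2.
Proof. move=> h sub m hm; apply: h; apply/negP => /sub; exact/negP. Qed.

Theorem proposition2p6 (K : fieldType) (charK : [pchar K] =i pred0)
  (r : nat) (V : lmodType K) (Y : V -> int -> 'rV[int]_r -> V -> V) (one : V)
  (HV : toroidal_vertex_algebra Y one)
  (W : lmodType K) (YW : V -> int -> 'rV[int]_r -> W -> W)
  (HW : toroidal_module Y one YW)
  (Y0 : V -> int -> V -> V)
  (HY0 : forall u, in_V0 Y one u -> forall n v,
           is_fsum (fun m => Y u n m v) (Y0 u n v)) :
  (forall v m0 m n k w, k != m -> YW (Y v m0 m one) n k w = 0) /\
  (forall v n k w, is_fsum (fun m => YW (Y v (-1) m one) n k w) (YW v n k w)) /\
  (exists Y0W : V -> int -> W -> W,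
     [/\ (forall u, in_V0 Y one u -> forall n w,
            is_fsum (fun m => YW u n m w) (Y0W u n w)),
         va_module (in_V0 Y one) Y0 one Y0W
       & (toroidal_irreducible YW -> va_irreducible (in_V0 Y one) Y0W)]).
Proof.
have HF : toroidal_field_map YW by case: HW.
have Hvac : forall n m w, YW one n m w = if (n == -1) && (m == 0) then w else 0
  by case: HW.
split; first by move=> *; apply: (part1 HW).
split.
  move=> v n k w; exists [:: k]; split => //.
    by move=> m; rewrite inE => hm; apply: (part1 HW); rewrite eq_sym.
  by rewrite big_seq1 (part2 HV HW).
exists (Y0W_of YW); split.
- move=> u Pu n w; have [S [uS hS]] := V0_supp Pu.
  rewrite (Y0W_char uS (hS W YW HW n w)); exact: (fsum_of uS (hS W YW HW n w)).
- split.
  + move=> a u1 u2 n w P1 P2.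
    have [S1 [uS1 hS1]] := V0_supp P1; have [S2 [uS2 hS2]] := V0_supp P2.
    set S := undup (S1 ++ S2).
    have uS : uniq S by exact: undup_uniq.
    have s1 : {subset S1 <= S} by move=> x hx; rewrite mem_undup mem_cat hx.
    have s2 : {subset S2 <= S} by move=> x hx; rewrite mem_undup mem_cat hx orbT.
    have h1 := supp_sub (hS1 W YW HW n w) s1.
    have h2 := supp_sub (hS2 W YW HW n w) s2.
    have h12 : supp_in (fun m => YW (a *: u1 + u2) n m w) S.
      move=> m hm /=; case: HF => H1 _ _; by rewrite H1 h1 // h2 // scaler0 addr0.
    rewrite (Y0W_char uS h12) (Y0W_char uS h1) (Y0W_char uS h2).
    rewrite scaler_sumr -big_split; apply: eq_bigr => m _; by case: HF => H1 _ _.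
  + move=> u n a w1 w2 Pu.
    have [S [uS hS]] := V0_supp Pu.
    rewrite !(Y0W_char uS (hS W YW HW n _)).
    rewrite scaler_sumr -big_split; apply: eq_bigr => m _; by case: HF => _ H2 _.
  + move=> u w Pu; case: HF => _ _ /(_ u w) [N0 HN0]; exists N0 => n hn.
    rewrite (Y0W_char (s := [::])) ?big_nil // => m _; exact: HN0.
  + move=> n w; rewrite (Y0W_char (s := [:: 0])) // ?big_seq1 ?Hvac ?eqxx ?andbT //.
    move=> m; rewrite inE => hm /=; rewrite Hvac (negbTE hm) andbF //.
  + move=> u v w p q s N Pu Pv; exact (@jac_V0 _ _ _ _ _ HV _ _ HW _ HY0 u v w p q s N Pu Pv).
- case=> [[w0 hw0] Hirr]; split; first by exists w0.
  move=> U HU Hcl; apply: Hirr => // v n m w Uw.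
  have P' : in_V0 Y one (Y v (-1) m one).
    by exists [:: (1, v, -1, m)]; rewrite big_seq1 /= scale1r.
  have := Hcl _ n w P' Uw.
  have hs : supp_in (fun k => YW (Y v (-1) m one) n k w) [:: m].
    by move=> k; rewrite inE => hk; apply: (part1 HW).
  by rewrite (Y0W_char (s := [:: m])) // big_seq1 (part2 HV HW).
Qed.
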